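(* Let $M$ be a nonempty Hausdorff space and $\sigma:\mathbb{R}\to\mathcal{T}(M)$ a spectral family in $\mathcal{T}(M)$, with admissible domain $\mathcal{D}(\sigma)$ and induced function $f_\sigma:\mathcal{D}(\sigma)\to\mathbb{R}$. Then $sp(\sigma)=\overline{f_\sigma(\mathcal{D}(\sigma))}$.
   Context: $\mathcal{T}(M)$ is the complete lattice of open subsets of $M$ with $\bigvee_k U_k=\bigcup_k U_k$ and $\bigwedge_k U_k=\mathrm{int}(\bigcap_k U_k)$. A spectral family in $\mathcal{T}(M)$ is a map $\sigma:\mathbb{R}\to\mathcal{T}(M)$ with $\sigma(\lambda)\subseteq\sigma(\mu)$ for $\lambda\le\mu$, $\sigma(\lambda)=\mathrm{int}\bigcap_{\mu>\lambda}\sigma(\mu)$ for all $\lambda$, $\mathrm{int}\bigcap_\lambda\sigma(\lambda)=\emptyset$ and $\bigcup_\lambda\sigma(\lambda)=M$. The admissible domain is $\mathcal{D}(\sigma):=M\setminus\bigcap_{\lambda\in\mathbb{R}}\sigma(\lambda)$, and $f_\sigma(x):=\inf\{\lambda : x\in\sigma(\lambda)\}$ for $x\in\mathcal{D}(\sigma)$. The resolvent set $R(\sigma)$ is the set of $\lambda\in\mathbb{R}$ such that $\sigma$ is constant on a neighbourhood of $\lambda$, and $sp(\sigma):=\mathbb{R}\setminus R(\sigma)$. *)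

(* Defs.v *)
From mathcomp Require Import all_boot all_order all_algebra.
From mathcomp Require Import all_classical all_reals all_analysis.
Set Implicit Arguments. Unset Strict Implicit. Unset Printing Implicit Defensive.
Import Order.TTheory GRing.Theory Num.Theory.
Import numFieldTopology.Exports.
Local Open Scope classical_set_scope.
Local Open Scope ring_scope.

(* Spectral family in the lattice T(M) of open subsets of M.
   Meets in T(M) are interiors of intersections. *)
Definition spectral_family {R : realType} {M : topologicalType}
  (sigma : R -> set M) : Prop :=
  [/\ (forall l, open (sigma l)),
      (forall l m, l <= m -> sigma l `<=` sigma m),
      (forall l, sigma l = interior (\bigcap_(m in `]l, +oo[) sigma m)),
      interior (\bigcap_(l : R) sigma l) = set0
    & \bigcup_(l : R) sigma l = [set: M]].

Definition adm_domain {R : realType} {M : topologicalType}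
  (sigma : R -> set M) : set M :=
  ~` \bigcap_(l : R) sigma l.

(* f_sigma x = inf { l | x in sigma l } (meaningful for x in D(sigma)) *)
Definition f_sigma {R : realType} {M : topologicalType}
  (sigma : R -> set M) (x : M) : R :=
  inf [set l : R | sigma l x].

Definition resolvent {R : realType} {M : topologicalType}
  (sigma : R -> set M) : set R :=
  [set l : R | \forall m \near l, sigma m = sigma l].

Definition spectrum {R : realType} {M : topologicalType}
  (sigma : R -> set M) : set R :=
  ~` resolvent sigma.

(* Main.v *)
Require Import Defs.
From mathcomp Require Import all_boot all_order all_algebra.
From mathcomp Require Import all_classical all_reals all_analysis.
From mathcomp Require Import lra.
Import numFieldTopology.Exports.
Import Order.TTheory GRing.Theory Num.Theory.
Local Open Scope classical_set_scope.
Local Open Scope ring_scope.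

Section P.
Variables (R : realType) (M : topologicalType) (sigma : R -> set M).
Hypothesis mono : forall l m, l <= m -> sigma l `<=` sigma m.
Hypothesis cover : \bigcup_(l : R) sigma l = [set: M].

Lemma hinf x : adm_domain sigma x -> has_inf [set l : R | sigma l x].
Proof.
move=> hx; split.
  have : [set: M] x by [].
  rewrite -cover => -[l _ hl]; by exists l.
have [l0 hl0] : exists l0, ~ sigma l0 x.
  apply: contrapT => H; apply: hx => l _; apply: contrapT => h; apply: H; by exists l.
exists l0 => l hl; rewrite /mkset.
case: (leP l0 l) => // /ltW hle; exfalso; apply: hl0.
exact: (mono _ _ hle x hl).
Qed.

Lemma ballR (c e t : R) : ball c e t <-> `|c - t| < e.
Proof. by rewrite -ball_normE. Qed.

Lemma lemA (c e : R) : (forall m, ball c e m -> sigma m = sigma c) ->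
  forall x, adm_domain sigma x -> ~ ball c e (f_sigma sigma x).
Proof.
move=> Hc x hx; set t := f_sigma sigma x => /ballR hb.
set d := e - `|c - t|.
have d0 : 0 < d by rewrite subr_gt0.
have [m hm mlt] := inf_adherent (Num.Theory.divr_gt0 d0 (ltr0n R 2)) (hinf x hx).
have hd2 : 0 < d / 2 by rewrite divr_gt0.
have [hb1 hb2] := ltr_normlP _ _ hb.
have hdd : d = e - `|c - t| by [].
have [hn|hn] := lerP 0 (c - t).
- have hn' : `|c - t| = c - t by rewrite ger0_norm.
  have ht1 : ball c e (t + d / 2).
    by apply/ballR; rewrite ltr_norml; apply/andP; split; lra.
  have ht2 : ball c e (t - d / 2).
    by apply/ballR; rewrite ltr_norml; apply/andP; split; lra.
  have hx1 : sigma (t + d / 2) x by apply: (mono _ _ _ x hm); rewrite ltW.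
  have hx2 : sigma (t - d / 2) x by rewrite (Hc _ ht2) -(Hc _ ht1).
  have := ge_inf (hinf x hx).2 hx2; rewrite -/(f_sigma sigma x) -/t.
  lra.
- have hn' : `|c - t| = - (c - t) by rewrite ltr0_norm.
  have ht1 : ball c e (t + d / 2).
    by apply/ballR; rewrite ltr_norml; apply/andP; split; lra.
  have ht2 : ball c e (t - d / 2).
    by apply/ballR; rewrite ltr_norml; apply/andP; split; lra.
  have hx1 : sigma (t + d / 2) x by apply: (mono _ _ _ x hm); rewrite ltW.
  have hx2 : sigma (t - d / 2) x by rewrite (Hc _ ht2) -(Hc _ ht1).
  have := ge_inf (hinf x hx).2 hx2; rewrite -/(f_sigma sigma x) -/t.
  lra.
Qed.
Lemma lemB (c e : R) : (forall x, adm_domain sigma x -> ~ ball c e (f_sigma sigma x)) ->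
  forall a b, ball c e a -> ball c e b -> sigma b `<=` sigma a.
Proof.
move=> H a b ha hb x hxb.
case: (pselect (adm_domain sigma x)) => hx; last first.
  by move: hx; rewrite /adm_domain => /contrapT; apply.
have hfb : f_sigma sigma x <= b by apply: (ge_inf (hinf x hx).2).
have hfa : f_sigma sigma x < a.
  move: (H x hx) (ha) (hb) hfb; rewrite !ballR => hn.
  case: (ltP (f_sigma sigma x) a) => // hle h1 h2 h3; exfalso; apply: hn.
  apply/ballR; have [h1a h1b] := ltr_normlP _ _ h1.
  have [h2a h2b] := ltr_normlP _ _ h2; apply/ltr_normlP; split; lra.
have hpos : 0 < a - f_sigma sigma x by rewrite subr_gt0.
have [m hm mlt] := inf_adherent hpos (hinf x hx).
apply: (mono _ _ _ x hm); rewrite -/(f_sigma sigma x) in mlt; apply: ltW; lra.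
Qed.

End P.

Theorem proposition2p33 (R : realType) (M : topologicalType)
  (hM : hausdorff_space M) (hne : [set: M] !=set0)
  (sigma : R -> set M) (hs : spectral_family sigma) :
  spectrum sigma = closure (f_sigma sigma @` adm_domain sigma).
Proof.
unfold spectral_family in hs; destruct hs as [_ mono _ _ cover].
apply/seteqP; split => l.
- move=> hsp B /nbhs_ballP [e e0 heB].
  apply: contrapT => hne'; apply: hsp; apply/nbhs_ballP; exists e => // m hm.
  have H : forall x, adm_domain sigma x -> ~ ball l e (f_sigma sigma x).
    move=> x hx hb; apply: hne'; exists (f_sigma sigma x).
    have h1 : (f_sigma sigma @` adm_domain sigma) (f_sigma sigma x) by exists x.
    exact: (conj h1 (heB _ hb)).
  have hl : ball l e l by exact: ballxx.
  apply/seteqP; split.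
    exact: (@lemB R M sigma mono cover l e H l m hl hm).
  exact: (@lemB R M sigma mono cover l e H m l hm hl).
- move=> hcl hres; move/nbhs_ballP: hres => [e e0 he].
  have [_ [[x hx <-] hb]] := hcl _ (nbhsx_ballx l e e0) .
  exact: (@lemA R M sigma mono cover l e he x hx hb).
Qed.
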